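(* Let $\mathcal{H}$ be a hedgehog with support function $h$ and average width $\overline{w}$, let $k>2$ be an integer, and let $\mathcal{P}_k$ be its $k$th Order Preserving Set. For $s\in[0,2\pi]$, the point $\mathcal{P}_k(s)$ is singular (i.e. $\mathcal{P}_k'(s)=0$) if and only if \[ \frac1k\sum_{j=1}^{k}\rho_{\mathcal{H}}\Big(s+\frac{2\pi j}{k}\Big)=\frac12\overline{w}. \] Furthermore, a singular point $\mathcal{P}_k(s)$ is a cusp if and only if $\sum_{j=1}^{k}\rho_{\mathcal{H}}'\big(s+\frac{2\pi j}{k}\big)\neq0$.
   Context: Write $u(s)=(\cos s,\sin s)$, $u'(s)=(-\sin s,\cos s)$. A hedgehog is a closed planar curve determined by a smooth $2\pi$-periodic function $h$ (its support function) via $\mathcal{H}(s)=h(s)u(s)+h'(s)u'(s)$. Its signed radius of curvature at parameter $s$ is $\rho_{\mathcal{H}}(s)=h(s)+h''(s)$, and its average width is $\overline{w}=\frac1\pi\int_0^{2\pi}h(s)\,ds$. For $(x,y)\in\mathbb{R}^2$ let $(x,y)^\perp=(-y,x)$. The $k$th Order Preserving Set of $\mathcal{H}$ is the curve $\mathcal{P}_k(s)=\frac{1}{k}\sum_{j=1}^{k}\Big(\cos\big(\tfrac{2\pi j}{k}\big)\,\mathcal{H}\big(s+\tfrac{2\pi j}{k}\big)-\sin\big(\tfrac{2\pi j}{k}\big)\,\mathcal{H}\big(s+\tfrac{2\pi j}{k}\big)^{\perp}\Big)-\frac{1}{2}\overline{w}\,u(s)$. A singular point $f(s_0)$ of a smooth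 curve $f$ is a cusp if $f$ is locally diffeomorphic (in source and target) near $s_0$ to $t\mapsto(t^2,t^3)$ at $t=0$; equivalently $f'(s_0)=0$ and $\det(f''(s_0),f'''(s_0))\neq0$. *)

(* Defs.v *)
From Stdlib Require Import Reals.
From Coquelicot Require Import Coquelicot.
Open Scope R_scope.

Definition u (s : R) : R * R := (cos s, sin s).
Definition u' (s : R) : R * R := (- sin s, cos s).

Definition perp (p : R * R) : R * R := (- snd p, fst p).

Definition vadd (p q : R * R) : R * R := (fst p + fst q, snd p + snd q).
Definition vscale (a : R) (p : R * R) : R * R := (a * fst p, a * snd p).

Definition smooth (h : R -> R) : Prop :=
  forall (n : nat) (x : R), ex_derive (Derive_n h n) x.
Definition periodic_2pi (h : R -> R) : Prop :=
  forall s : R, h (s + 2 * PI) = h s.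

Definition hedgehog (h : R -> R) (s : R) : R * R :=
  vadd (vscale (h s) (u s)) (vscale (Derive h s) (u' s)).

Definition rho (h : R -> R) (s : R) : R := h s + Derive_n h 2 s.

Definition avg_width (h : R -> R) : R := / PI * RInt h 0 (2 * PI).

Fixpoint vsum (f : nat -> R * R) (n : nat) : R * R :=
  match n with
  | O => (0, 0)
  | S m => vadd (vsum f m) (f (S m))
  end.

Fixpoint rsum (f : nat -> R) (n : nat) : R :=
  match n with
  | O => 0
  | S m => rsum f m + f (S m)
  end.

Definition theta (k j : nat) : R := 2 * PI * INR j / INR k.

Definition OPS (k : nat) (h : R -> R) (s : R) : R * R :=
  vadd
    (vscale (/ INR k)
       (vsum (fun j =>
          vadd (vscale (cos (theta k j)) (hedgehog h (s + theta k j)))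
               (vscale (- sin (theta k j)) (perp (hedgehog h (s + theta k j)))))
        k))
    (vscale (- (1/2) * avg_width h) (u s)).

Definition dcurve (n : nat) (f : R -> R * R) (s : R) : R * R :=
  (Derive_n (fun t => fst (f t)) n s, Derive_n (fun t => snd (f t)) n s).

Definition singular_at (f : R -> R * R) (s0 : R) : Prop :=
  dcurve 1 f s0 = (0, 0).

Definition det2 (p q : R * R) : R := fst p * snd q - snd p * fst q.

Definition cusp_at (f : R -> R * R) (s0 : R) : Prop :=
  singular_at f s0 /\ det2 (dcurve 2 f s0) (dcurve 3 f s0) <> 0.

(* Main.v *)
Require Import Defs.
From Stdlib Require Import Reals Lra Lia.
From Coquelicot Require Import Coquelicot.
Open Scope R_scope.

Lemma Dplus (f g : R -> R) x a b :
  is_derive f x a -> is_derive g x b -> is_derive (fun t => f t + g t) x (a + b).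
Proof. intros; apply (is_derive_plus f g x a b); auto. Qed.

Lemma Dmult (f g : R -> R) x a b :
  is_derive f x a -> is_derive g x b -> is_derive (fun t => f t * g t) x (a * g x + f x * b).
Proof. intros; apply (is_derive_mult f g x a b); auto. intros; apply Rmult_comm. Qed.

Lemma Dscal (f : R -> R) x c a :
  is_derive f x a -> is_derive (fun t => c * f t) x (c * a).
Proof. apply is_derive_scal. Qed.

Lemma Dshift (f : R -> R) x c a :
  is_derive f (x + c) a -> is_derive (fun t => f (t + c)) x a.
Proof.
  intros H. assert (Hg : is_derive (fun t => t + c) x 1).
  { auto_derive; auto; ring. }
  pose proof (is_derive_comp f (fun t => t + c) x a 1 H Hg) as K.
  unfold scal in K; simpl in K; unfold mult in K; simpl in K; rewrite Rmult_1_l in K. exact K.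
Qed.

Lemma Drep (f : R -> R) x a b : is_derive f x a -> a = b -> is_derive f x b.
Proof. intros H E; subst; exact H. Qed.

Lemma rsum_ext f g n : (forall j, f j = g j) -> rsum f n = rsum g n.
Proof. intros E; induction n; simpl; auto. rewrite IHn, E; auto. Qed.

Lemma rsum_scal c f n : rsum (fun j => c * f j) n = c * rsum f n.
Proof. induction n; simpl. ring. rewrite IHn; ring. Qed.

Lemma fst_vsum f n : fst (vsum f n) = rsum (fun j => fst (f j)) n.
Proof. induction n; simpl; auto. rewrite IHn; auto. Qed.

Lemma snd_vsum f n : snd (vsum f n) = rsum (fun j => snd (f j)) n.
Proof. induction n; simpl; auto. rewrite IHn; auto. Qed.

Lemma Drsum (F : nat -> R -> R) (F' : nat -> R) x n :
  (forall j, is_derive (F j) x (F' j)) ->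
  is_derive (fun t => rsum (fun j => F j t) n) x (rsum F' n).
Proof.
  intros H; induction n; simpl.
  - apply (is_derive_const (V:=R_NormedModule) 0 x).
  - apply Dplus; auto.
Qed.

Definition H1 h x := h x * cos x + Derive h x * - sin x.
Definition H2 h x := h x * sin x + Derive h x * cos x.

Lemma DH1 h x : smooth h -> is_derive (H1 h) x (- rho h x * sin x).
Proof.
  intros Hs. unfold H1, rho. auto_derive.
  - repeat split; auto. apply (Hs 0%nat x). apply (Hs 1%nat x).
  - simpl. match goal with |- ?a = ?b => change (@eq R a b) end. replace (Derive (fun x : R => h x) x) with (Derive h x) by reflexivity. replace (Derive (fun x : R => Derive (fun x0 : R => h x0) x) x) with (Derive (fun x : R => Derive h x) x) by reflexivity. ring.
Qed.

Lemma DH2 h x : smooth h -> is_derive (H2 h) x (rho h x * cos x).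
Proof.
  intros Hs. unfold H2, rho. auto_derive.
  - repeat split; auto. apply (Hs 0%nat x). apply (Hs 1%nat x).
  - simpl. match goal with |- ?a = ?b => change (@eq R a b) end.
    replace (Derive (fun x : R => h x) x) with (Derive h x) by reflexivity.
    replace (Derive (fun x : R => Derive (fun x0 : R => h x0) x) x) with (Derive (fun x : R => Derive h x) x) by reflexivity. ring.
Qed.

Definition T1 k h j t := fst (vadd (vscale (cos (theta k j)) (hedgehog h (t + theta k j)))
               (vscale (- sin (theta k j)) (perp (hedgehog h (t + theta k j))))).
Definition T2 k h j t := snd (vadd (vscale (cos (theta k j)) (hedgehog h (t + theta k j)))
               (vscale (- sin (theta k j)) (perp (hedgehog h (t + theta k j))))).

Lemma DT1 k h j x : smooth h -> is_derive (T1 k h j) x (- rho h (x + theta k j) * sin x).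
Proof.
  intros Hs. set (a := theta k j).
  apply (is_derive_ext (fun t => cos a * H1 h (t + a) + sin a * H2 h (t + a))).
  { intros t. unfold T1, H1, H2, hedgehog, vadd, vscale, perp, u, u'; simpl. fold a. ring. }
  eapply Drep. apply Dplus; apply Dscal; apply Dshift; [apply DH1|apply DH2]; auto.
  match goal with |- ?a = ?b => change (@eq R a b) end.
  rewrite sin_plus, cos_plus.
  pose proof (sin2_cos2 a). unfold Rsqr in H. 
  replace (- rho h (x + a) * sin x) with (- rho h (x + a) * sin x * (sin a * sin a + cos a * cos a)) by (rewrite H; ring).
  ring.
Qed.

Lemma DT2 k h j x : smooth h -> is_derive (T2 k h j) x (rho h (x + theta k j) * cos x).
Proof.
  intros Hs. set (a := theta k j).
  apply (is_derive_ext (fun t => cos a * H2 h (t + a) + (- sin a) * H1 h (t + a))).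
  { intros t. unfold T2, H1, H2, hedgehog, vadd, vscale, perp, u, u'; simpl. fold a. ring. }
  eapply Drep. apply Dplus; apply Dscal; apply Dshift; [apply DH2|apply DH1]; auto.
  match goal with |- ?a = ?b => change (@eq R a b) end.
  rewrite sin_plus, cos_plus.
  pose proof (sin2_cos2 a). unfold Rsqr in H. 
  replace (rho h (x + a) * cos x) with (rho h (x + a) * cos x * (sin a * sin a + cos a * cos a)) by (rewrite H; ring).
  ring.
Qed.

Definition gg k h t := / INR k * rsum (fun j => rho h (t + theta k j)) k - 1/2 * avg_width h.

Lemma DP1 k h x : smooth h -> is_derive (fun t => fst (OPS k h t)) x (gg k h x * - sin x).
Proof.
  intros Hs.
  apply (is_derive_ext (fun t => / INR k * rsum (fun j => T1 k h j t) k + (- (1/2) * avg_width h) * cos t)).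
  { intros t. unfold OPS, vadd, vscale, u. simpl. rewrite fst_vsum. reflexivity. }
  eapply Drep. apply Dplus. apply Dscal. apply Drsum. intros j. apply DT1; auto.
  apply Dscal. apply is_derive_cos.
  match goal with |- ?a = ?b => change (@eq R a b) end.
  assert (E : rsum (fun j => - rho h (x + theta k j) * sin x) k = - sin x * rsum (fun j => rho h (x + theta k j)) k)
    by (rewrite <- rsum_scal; apply rsum_ext; intros; ring).
  rewrite E. unfold gg. ring.
Qed.

Lemma DP2 k h x : smooth h -> is_derive (fun t => snd (OPS k h t)) x (gg k h x * cos x).
Proof.
  intros Hs.
  apply (is_derive_ext (fun t => / INR k * rsum (fun j => T2 k h j t) k + (- (1/2) * avg_width h) * sin t)).
  { intros t. unfold OPS, vadd, vscale, u. simpl. rewrite snd_vsum. reflexivity. }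
  eapply Drep. apply Dplus. apply Dscal. apply Drsum. intros j. apply DT2; auto.
  apply Dscal. apply is_derive_sin.
  match goal with |- ?a = ?b => change (@eq R a b) end.
  assert (E : rsum (fun j => rho h (x + theta k j) * cos x) k = cos x * rsum (fun j => rho h (x + theta k j)) k)
    by (rewrite <- rsum_scal; apply rsum_ext; intros; ring).
  rewrite E. unfold gg. ring.
Qed.

Definition g1 k h t := / INR k * rsum (fun j => Derive h (t + theta k j) + Derive_n h 3 (t + theta k j)) k.
Definition g2 k h t := / INR k * rsum (fun j => Derive_n h 2 (t + theta k j) + Derive_n h 4 (t + theta k j)) k.

Lemma Drho h x : smooth h -> is_derive (rho h) x (Derive h x + Derive_n h 3 x).
Proof.
  intros Hs. unfold rho. apply Dplus.
  exact (Derive_correct _ _ (Hs 0%nat x)). exact (Derive_correct _ _ (Hs 2%nat x)).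
Qed.

Lemma Drho1 h x : smooth h -> is_derive (fun y => Derive h y + Derive_n h 3 y) x (Derive_n h 2 x + Derive_n h 4 x).
Proof.
  intros Hs. apply Dplus.
  exact (Derive_correct _ _ (Hs 1%nat x)). exact (Derive_correct _ _ (Hs 3%nat x)).
Qed.

Lemma Dgg k h x : smooth h -> is_derive (gg k h) x (g1 k h x).
Proof.
  intros Hs.
  apply (is_derive_ext (fun t => / INR k * rsum (fun j => rho h (t + theta k j)) k + (- (1/2 * avg_width h)))).
  { intros t. unfold gg. match goal with |- ?a = ?b => change (@eq R a b) end. ring. }
  eapply Drep. apply Dplus. apply Dscal. apply Drsum. intros j. apply Dshift. apply Drho; auto.
  apply (is_derive_const (V:=R_NormedModule)).
  match goal with |- ?a = ?b => change (@eq R a b) end.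
  unfold g1. change (@zero R_NormedModule) with 0. ring.
Qed.

Lemma Dg1 k h x : smooth h -> is_derive (g1 k h) x (g2 k h x).
Proof.
  intros Hs. unfold g1, g2.
  apply Dscal. apply (Drsum (fun j t => Derive h (t + theta k j) + Derive_n h 3 (t + theta k j))).
  intros j. apply (Dshift (fun y => Derive h y + Derive_n h 3 y)). apply Drho1; auto.
Qed.

Lemma Dmsin x : is_derive (fun y => - sin y) x (- cos x).
Proof. auto_derive; auto. match goal with |- ?a = ?b => change (@eq R a b) end. ring. Qed.
Lemma Dmcos x : is_derive (fun y => - cos y) x (sin x).
Proof. auto_derive; auto. match goal with |- ?a = ?b => change (@eq R a b) end. ring. Qed.
Lemma Dsin x : is_derive sin x (cos x).
Proof. apply is_derive_sin. Qed.
Lemma Dcos x : is_derive cos x (- sin x).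
Proof. apply is_derive_cos. Qed.

Theorem proposition3p15 (h : R -> R) (k : nat) (s : R) :
  smooth h -> periodic_2pi h -> (2 < k)%nat -> 0 <= s <= 2 * PI ->
  (singular_at (OPS k h) s <->
     / INR k * rsum (fun j => rho h (s + theta k j)) k = (1/2) * avg_width h)
  /\
  (singular_at (OPS k h) s ->
     (cusp_at (OPS k h) s <->
        rsum (fun j => Derive (rho h) (s + theta k j)) k <> 0)).
Proof.
  intros Hs _ Hk _.
  set (f1 := fun t => fst (OPS k h t)).
  set (f2 := fun t => snd (OPS k h t)).
  assert (A1 : forall x, Derive_n f1 1 x = gg k h x * - sin x)
    by (intros; apply is_derive_unique, DP1; auto).
  assert (A2 : forall x, Derive_n f2 1 x = gg k h x * cos x)
    by (intros; apply is_derive_unique, DP2; auto).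
  assert (B1 : forall x, Derive_n f1 2 x = g1 k h x * - sin x + gg k h x * - cos x).
  { intros x. change (Derive (Derive_n f1 1) x = g1 k h x * - sin x + gg k h x * - cos x). rewrite (Derive_ext _ _ x A1).
    apply is_derive_unique. apply (Dmult (gg k h) (fun y => - sin y)). apply Dgg; auto. apply Dmsin. }
  assert (B2 : forall x, Derive_n f2 2 x = g1 k h x * cos x + gg k h x * - sin x).
  { intros x. change (Derive (Derive_n f2 1) x = g1 k h x * cos x + gg k h x * - sin x). rewrite (Derive_ext _ _ x A2).
    apply is_derive_unique. apply (Dmult (gg k h) cos). apply Dgg; auto. apply Dcos. }
  assert (C1 : Derive_n f1 3 s = (g2 k h s * - sin s + g1 k h s * - cos s) + (g1 k h s * - cos s + gg k h s * sin s)).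
  { change (Derive (Derive_n f1 2) s = (g2 k h s * - sin s + g1 k h s * - cos s) + (g1 k h s * - cos s + gg k h s * sin s)).
    rewrite (Derive_ext _ _ s B1).
    apply is_derive_unique. apply Dplus. apply (Dmult (g1 k h) (fun y => - sin y)).
    apply Dg1; auto. apply Dmsin. apply (Dmult (gg k h) (fun y => - cos y)). apply Dgg; auto. apply Dmcos. }
  assert (C2 : Derive_n f2 3 s = (g2 k h s * cos s + g1 k h s * - sin s) + (g1 k h s * - sin s + gg k h s * - cos s)).
  { change (Derive (Derive_n f2 2) s = (g2 k h s * cos s + g1 k h s * - sin s) + (g1 k h s * - sin s + gg k h s * - cos s)).
    rewrite (Derive_ext _ _ s B2).
    apply is_derive_unique. apply Dplus. apply (Dmult (g1 k h) cos).
    apply Dg1; auto. apply Dcos. apply (Dmult (gg k h) (fun y => - sin y)). apply Dgg; auto. apply Dmsin. }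
  pose proof (sin2_cos2 s) as SC. unfold Rsqr in SC.
  assert (Sing : singular_at (OPS k h) s <-> gg k h s = 0).
  { unfold singular_at, dcurve. fold f1 f2. rewrite A1, A2. split.
    - intros E. injection E. intros E2 E1. nra.
    - intros E. rewrite E. f_equal; ring. }
  assert (Kpos : 0 < INR k) by (apply lt_0_INR; lia).
  split.
  - rewrite Sing. unfold gg. split; intros; lra.
  - intros Hsing. apply Sing in Hsing.
    assert (Ev : rsum (fun j => Derive (rho h) (s + theta k j)) k =
                 rsum (fun j => Derive h (s + theta k j) + Derive_n h 3 (s + theta k j)) k).
    { apply rsum_ext. intros j. apply is_derive_unique, Drho; auto. }
    rewrite Ev.
    assert (Det : det2 (dcurve 2 (OPS k h) s) (dcurve 3 (OPS k h) s) = 2 * (g1 k h s) ^ 2).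
    { change (Derive_n f1 2 s * Derive_n f2 3 s - Derive_n f2 2 s * Derive_n f1 3 s = 2 * g1 k h s ^ 2).
      rewrite B1, B2, C1, C2, Hsing.
      replace (2 * g1 k h s ^ 2) with (2 * g1 k h s ^ 2 * (sin s * sin s + cos s * cos s)) by (rewrite SC; ring).
      ring. }
    unfold cusp_at. rewrite Det.
    assert (Hsing' : singular_at (OPS k h) s) by (apply Sing; auto).
    unfold g1. split.
    + intros [_ H] E. apply H. rewrite E. ring.
    + intros H. split; auto. intros E.
      assert (E' : / INR k * rsum (fun j => Derive h (s + theta k j) + Derive_n h 3 (s + theta k j)) k = 0) by nra.
      apply Rmult_integral in E'. destruct E' as [E'|E']; auto.
      apply Rinv_neq_0_compat in E'; auto; lra.
Qed.
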